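(* Let $G=(V,E)$ be a $k$-edge-connected multigraph with $k\ge1$, let $\bar x\in\mathbb{R}^E_{\ge0}$ be defined by $\bar x_e=\tfrac3k$ for all $e\in E$, and let $\emptyset\ne S\subseteq V$ satisfy $|\delta(S)|\le\tfrac43k$. Then for every partition $\Pi$ of $S$ into nonempty parts, $$\sum_{P\in\Pi}\bar x\big(\delta_{G[S]}(P)\big)\ \ge\ 2(|\Pi|-1),$$ i.e. the restriction of $\bar x$ to the edges of $G[S]$ lies in the dominant of the spanning tree polytope of $G[S]$.
   Context: $\delta(S)$ is the set of edges of $G$ with exactly one endpoint in $S$; $G[S]$ is the subgraph induced by $S$ and $\delta_{G[S]}(P)$ is the set of edges of $G[S]$ with exactly one endpoint in $P$. For $F\subseteq E$, $\bar x(F)=\sum_{e\in F}\bar x_e$. $k$-edge-connected means $|\delta(U)|\ge k$ for all $\emptyset\neq U\subsetneq V$. *)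

(* Defs.v *)
From HB Require Import structures.
From mathcomp Require Import all_boot all_order all_algebra.
Set Implicit Arguments. Unset Strict Implicit. Unset Printing Implicit Defensive.
Import Order.TTheory GRing.Theory Num.Theory.

(* A (finite) multigraph: vertex type V, edge type E (parallel edges and
   loops allowed), each edge e has endpoints (ends e).1 and (ends e).2. *)

Definition delta (V E : finType) (ends : E -> V * V) (S : {set V}) : {set E} :=
  [set e | ((ends e).1 \in S) != ((ends e).2 \in S)].

Definition delta_induced (V E : finType) (ends : E -> V * V) (S P : {set V})
  : {set E} :=
  [set e | [&& (ends e).1 \in S, (ends e).2 \in S &
              ((ends e).1 \in P) != ((ends e).2 \in P)]].

Definition k_edge_connected (V E : finType) (ends : E -> V * V) (k : nat) :=
  forall U : {set V}, U != set0 -> U != [set: V] -> k <= #|delta ends U|.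

Definition xsum (R : numDomainType) (E : finType) (x : E -> R) (F : {set E}) : R :=
  (\sum_(e in F) x e)%R.

(* Main.v *)
Require Import Defs.
From mathcomp Require Import all_boot all_order all_algebra.
From mathcomp Require Import ring lra.
Import Order.TTheory GRing.Theory Num.Theory.
Local Open Scope ring_scope.

Section Aux.
Variables (V E : finType) (ends : E -> V * V).

Definition sv (S : {set V}) (e : E) :=
  if (ends e).1 \in S then (ends e).1 else (ends e).2.
Definition fP S (P : {set V}) := [set e in delta ends S | sv S e \in P].

Lemma delta_sub (S P : {set V}) : P \subset S ->
  delta ends P \subset delta_induced ends S P :|: fP S P.
Proof.
move=> PS; apply/subsetP => e; rewrite /fP /delta /delta_induced /sv !inE.
case: (ends e) => u w /=.
case uP: (u \in P); case wP: (w \in P) => //= _.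
- have uS := subsetP PS _ uP; rewrite uS /=.
  by case wS: (w \in S).
- have wS := subsetP PS _ wP; rewrite wS /=.
  by case uS: (u \in S) => //=; rewrite wP.
Qed.

Lemma sum_fP (S : {set V}) (Pi : {set {set V}}) : partition Pi S ->
  (\sum_(P in Pi) #|fP S P| <= #|delta ends S|)%N.
Proof.
move=> pPi.
have -> : (\sum_(P in Pi) #|fP S P| =
    \sum_(P in Pi) \sum_(e in delta ends S) (sv S e \in P : nat))%N.
  apply: eq_bigr => P _; rewrite -sum1_card.
  rewrite (eq_bigl (fun e => (e \in delta ends S) && (sv S e \in P))); last first.
    by move=> e; rewrite /fP inE.
  by rewrite big_mkcondr /=; apply: eq_bigr => e _; case: (sv S e \in P).
rewrite exchange_big /= -sum1_card; apply: leq_sum => e _.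
set u := sv S e.
case: (pickP [pred P in Pi | u \in P]) => [B /andP[BPi uB] | none].
  rewrite (bigD1 B) //= uB big1 // => P /andP [PPi PB].
  case uP: (u \in P) => //.
  have := trivIsetP (partition_trivIset pPi) _ _ PPi BPi PB.
  by move/disjointFr => /(_ u uP); rewrite uB.
by rewrite big1 // => P PPi; have := none P; rewrite /= PPi /= => ->.
Qed.
End Aux.
Arguments sv {V E}.
Arguments fP {V E}.
Arguments delta_sub {V E}.
Arguments sum_fP {V E}.

Theorem mainTheorem7 (R : realFieldType) (V E : finType) (ends : E -> V * V)
    (k : nat) (S : {set V}) :
  (1 <= k)%N ->
  k_edge_connected ends k ->
  S != set0 ->
  (#|delta ends S|%:R <= (4%:R / 3%:R) * k%:R :> R) ->
  let xbar : E -> R := fun _ => 3%:R / k%:R in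
  forall Pi : {set {set V}}, partition Pi S ->
    2%:R * ((#|Pi|)%:R - 1) <= \sum_(P in Pi) xsum xbar (delta_induced ends S P).
Proof.
move=> k1 kec S0 dS xbar Pi pPi.
have xs : forall F, xsum xbar F = #|F|%:R * (3%:R / k%:R).
  by move=> F; rewrite /xsum /xbar sumr_const; exact: (esym (mulr_natl _ _)).
rewrite (eq_bigr _ (fun P _ => xs (delta_induced ends S P))).
rewrite -mulr_suml -natr_sum.
set N := (\sum_(P in Pi) #|delta_induced ends S P|)%N.
have K0 : 0 < k%:R :> R by rewrite ltr0n.
case: (leqP #|Pi| 1) => hm.
  have h1 : #|Pi|%:R <= 1 :> R by rewrite -(ler_nat R) in hm.
  have h2 : 0 <= N%:R * (3%:R / k%:R) :> R.
    by apply: mulr_ge0; [rewrite ler0n | apply: divr_ge0; rewrite ?ler0n].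
  lra.
have key : (#|Pi| * k <= N + #|delta ends S|)%N.
  have h2 : (\sum_(P in Pi) (#|delta_induced ends S P| + #|fP ends S P|) <= N + #|delta ends S|)%N.
    by rewrite big_split /= leq_add2l; exact: sum_fP.
  apply: leq_trans h2.
    rewrite -sum_nat_const; apply: leq_sum => P PPi.
    have PS := partitionS pPi PPi.
    have P0 := partition_neq0 pPi PPi.
    have PT : P != [set: V].
      have : (0 < #|Pi :\ P|)%N.
        by move: hm; rewrite (cardsD1 P) PPi add1n ltnS.
      rewrite card_gt0 => /set0Pn [Q]; rewrite !inE => /andP [QP QPi].
      have /set0Pn [v vQ] := partition_neq0 pPi QPi.
      apply/negP => /eqP PTe.
      have := trivIsetP (partition_trivIset pPi) _ _ QPi PPi QP.
      by move/disjointFr => /(_ v vQ); rewrite PTe in_setT.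
    apply: leq_trans (kec P P0 PT) _.
    apply: leq_trans (subset_leq_card (delta_sub ends _ _ PS)) _.
    exact: (leq_card_setU _ _).1.
have keyR : #|Pi|%:R * k%:R <= N%:R + #|delta ends S|%:R :> R.
  by rewrite -natrM -natrD ler_nat.
have mR : 2%:R <= #|Pi|%:R :> R by rewrite ler_nat.
have hp : 0 <= (#|Pi|%:R - 2) * k%:R :> R by apply: mulr_ge0; [rewrite subr_ge0 | exact: ltW].
rewrite mulrA ler_pdivlMr //.
move: dS; rewrite mulrC mulrA ler_pdivlMr ?ltr0n //.
move=> dS.
nra.
Qed.
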